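(* $\{\omega \cdot 2, \omega^\star \cdot 2\} \leq_c \{\omega^2, (\omega^2)^\star\}$.
   Context: Structures have domains contained in $\omega$. For countable structures $\mathcal{A},\mathcal{B}$, the class $\{\mathcal{A},\mathcal{B}\}$ denotes the class of all structures (with domain $\subseteq\omega$) isomorphic to $\mathcal{A}$ or to $\mathcal{B}$. Linear orders are in the language $\{<\}$; $L^\star$ is the reverse of a linear order $L$; $\omega\cdot 2$, $\omega^2$ are ordinal order types. An enumeration operator $\Gamma$ is a c.e. set of pairs $(\alpha,\varphi)$ with $\alpha$ a finite set of basic (atomic or negated atomic) sentences of the input language with constants from $\omega$ and $\varphi$ a basic sentence of the output language with constants from $\omega$; $\Gamma(X)=\{\varphi : (\alpha,\varphi)\in\Gamma,\ \alpha\subseteq X\}$. $\Gamma$ is a computable embedding of $\mathcal{K}_0$ into $\mathcal{K}_1$ ($\mathcal{K}_0\leq_c\mathcal{K}_1$) if for every $\mathcal{A}\in\mathcal{K}_0$, $\Gamma$ applied to the atomic diagram of $\mathcal{A}$ is the atomic diagram of a structure $\Gamma(\mathcal{A})\in\mathcal{K}_1$, and for all $\mathcal{A},\mathcal{B}\in\mathcal{K}_0$, $\mathcal{A}\cong\mathcal{B}$ iff $\Gamma(\mathcal{A})\cong\Gamma(\mathcal{B})$. *)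

(* Defs.v *)
From Stdlib Require Import List Arith.
Import ListNotations.

(** Arities are handled loosely (inputs are lists of naturals); this does not
    change the class of computable partial functions. *)
Inductive recf : Type :=
| RZero : recf
| RSucc : recf
| RProj : nat -> recf
| RComp : recf -> list recf -> recf
| RPrimRec : recf -> recf -> recf
| RMu : recf -> recf.

Inductive reval : recf -> list nat -> nat -> Prop :=
| ev_zero v : reval RZero v 0
| ev_succ x v : reval RSucc (x :: v) (S x)
| ev_proj i v : i < length v -> reval (RProj i) v (nth i v 0)
| ev_comp f gs v ws y : revals gs v ws -> reval f ws y -> reval (RComp f gs) v y
| ev_prec0 f g v y : reval f v y -> reval (RPrimRec f g) (0 :: v) y
| ev_precS f g n v z y : reval (RPrimRec f g) (n :: v) z ->
    reval g (n :: z :: v) y -> reval (RPrimRec f g) (S n :: v) y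
| ev_mu f v n : reval f (n :: v) 0 ->
    (forall m, m < n -> exists k, reval f (m :: v) (S k)) -> reval (RMu f) v n
with revals : list recf -> list nat -> list nat -> Prop :=
| evs_nil v : revals [] v []
| evs_cons g gs v w ws : reval g v w -> revals gs v ws -> revals (g :: gs) v (w :: ws).

Definition ce (A : nat -> Prop) : Prop :=
  exists f : recf, forall n, A n <-> exists y, reval f [n] y.

Definition cpair (a b : nat) : nat := (a + b) * (a + b + 1) / 2 + b.

Inductive sentence : Type :=
| SEq : nat -> nat -> sentence
| SNeq : nat -> nat -> sentence
| SLt : nat -> nat -> sentence
| SNlt : nat -> nat -> sentence.

Definition code_sentence (s : sentence) : nat :=
  match s with
  | SEq a b => cpair 0 (cpair a b)
  | SNeq a b => cpair 1 (cpair a b)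
  | SLt a b => cpair 2 (cpair a b)
  | SNlt a b => cpair 3 (cpair a b)
  end.

Fixpoint code_list (l : list sentence) : nat :=
  match l with
  | [] => 0
  | s :: l' => S (cpair (code_sentence s) (code_list l'))
  end.

Record str : Type := mkStr { dom : nat -> Prop; rel : nat -> nat -> Prop }.

Definition holds (S : str) (s : sentence) : Prop :=
  match s with
  | SEq a b => dom S a /\ dom S b /\ a = b
  | SNeq a b => dom S a /\ dom S b /\ a <> b
  | SLt a b => dom S a /\ dom S b /\ rel S a b
  | SNlt a b => dom S a /\ dom S b /\ ~ rel S a b
  end.

Definition diagram (S : str) : sentence -> Prop := holds S.

Definition iso (A B : str) : Prop :=
  exists f : nat -> nat,
    (forall x, dom A x -> dom B (f x)) /\
    (forall x y, dom A x -> dom A y -> f x = f y -> x = y) /\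
    (forall y, dom B y -> exists x, dom A x /\ f x = y) /\
    (forall x y, dom A x -> dom A y -> (rel A x y <-> rel B (f x) (f y))).

Definition iso_to (A : str) (T : Type) (R : T -> T -> Prop) : Prop :=
  exists f : nat -> T,
    (forall x y, dom A x -> dom A y -> f x = f y -> x = y) /\
    (forall t, exists x, dom A x /\ f x = t) /\
    (forall x y, dom A x -> dom A y -> (rel A x y <-> R (f x) (f y))).

Definition rev_ord {T : Type} (R : T -> T -> Prop) : T -> T -> Prop := fun x y => R y x.

(** omega . 2 = omega + omega : lexicographic order on bool * nat, false first. *)
Definition lt_omega2 (p q : bool * nat) : Prop :=
  (fst p = false /\ fst q = true) \/ (fst p = fst q /\ snd p < snd q).

(** omega^* . 2 = omega^* + omega^* *)
Definition lt_omegastar2 (p q : bool * nat) : Prop :=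
  (fst p = false /\ fst q = true) \/ (fst p = fst q /\ rev_ord lt (snd p) (snd q)).

(** omega^2 = omega copies of omega : lexicographic order on nat * nat. *)
Definition lt_omegasq (p q : nat * nat) : Prop :=
  fst p < fst q \/ (fst p = fst q /\ snd p < snd q).

Definition class2 {T1 T2 : Type} (R1 : T1 -> T1 -> Prop) (R2 : T2 -> T2 -> Prop)
  (S : str) : Prop := iso_to S T1 R1 \/ iso_to S T2 R2.

(** * Enumeration operators. An operator is a relation between finite sets of
    basic sentences (given as lists) and basic sentences; it must be c.e. *)
Definition enum_op := list sentence -> sentence -> Prop.

Definition ce_op (G : enum_op) : Prop :=
  ce (fun n => exists alpha phi, G alpha phi /\
                 n = cpair (code_list alpha) (code_sentence phi)).

Definition apply_op (G : enum_op) (X : sentence -> Prop) : sentence -> Prop :=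
  fun phi => exists alpha, G alpha phi /\ forall psi, In psi alpha -> X psi.

Definition comp_embedding (G : enum_op) (K0 K1 : str -> Prop) : Prop :=
  ce_op G /\
  (forall A, K0 A -> exists B, K1 B /\ forall phi, apply_op G (diagram A) phi <-> diagram B phi) /\
  (forall A B GA GB, K0 A -> K0 B ->
     (forall phi, apply_op G (diagram A) phi <-> diagram GA phi) ->
     (forall phi, apply_op G (diagram B) phi <-> diagram GB phi) ->
     (iso A B <-> iso GA GB)).

Definition comp_reducible (K0 K1 : str -> Prop) : Prop :=
  exists G : enum_op, comp_embedding G K0 K1.

(* Main.v *)
Require Import Defs.
From Stdlib Require Import List Arith Lia Classical ClassicalEpsilon.
Import ListNotations.

Fixpoint mufree (f : recf) : Prop :=
  match f with
  | RZero | RSucc | RProj _ => True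
  | RComp f gs => mufree f /\ (fix mf (l : list recf) : Prop :=
        match l with [] => True | g :: l' => mufree g /\ mf l' end) gs
  | RPrimRec f g => mufree f /\ mufree g
  | RMu _ => False
  end.

Fixpoint mufreel (l : list recf) : Prop :=
  match l with [] => True | g :: l' => mufree g /\ mufreel l' end.

Lemma mufree_comp f gs : mufree (RComp f gs) <-> mufree f /\ mufreel gs.
Proof.
  simpl. split; intros [H1 H2]; split; auto; clear H1; induction gs; simpl in *; tauto.
Qed.

Scheme reval_mind := Induction for reval Sort Prop
  with revals_mind := Induction for revals Sort Prop.
Combined Scheme reval_comb from reval_mind, revals_mind.

Lemma reval_det_all :
  (forall f v y, reval f v y -> mufree f -> forall y', reval f v y' -> y = y') /\
  (forall gs v ws, revals gs v ws -> mufreel gs -> forall ws', revals gs v ws' -> ws = ws').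
Proof.
  apply (reval_comb
    (fun f v y _ => mufree f -> forall y', reval f v y' -> y = y')
    (fun gs v ws _ => mufreel gs -> forall ws', revals gs v ws' -> ws = ws')).
  - intros v _ y' H; inversion H; auto.
  - intros x v _ y' H; inversion H; auto.
  - intros i v l _ y' H; inversion H; auto.
  - intros f gs v ws y Hs IHs Hf IHf Hm y' H. apply mufree_comp in Hm as [Hm1 Hm2].
    inversion H; subst. assert (ws = ws0) by (apply IHs; auto). subst. apply IHf; auto.
  - intros f g v y Hf IHf [Hm1 Hm2] y' H. inversion H; subst. apply IHf; auto.
  - intros f g n v z y H1 IH1 H2 IH2 [Hm1 Hm2] y' H. inversion H; subst.
    assert (z = z0) by (apply IH1; simpl; auto). subst. apply IH2; auto.
  - intros f v n _ _ _ Hm. destruct Hm.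
  - intros v _ ws' H. inversion H; auto.
  - intros g gs v w ws Hg IHg Hs IHs [Hm1 Hm2] ws' H. inversion H; subst.
    f_equal; [apply IHg | apply IHs]; auto.
Qed.

Lemma reval_det f v y y' : mufree f -> reval f v y -> reval f v y' -> y = y'.
Proof. intros Hm H1 H2. exact (proj1 reval_det_all f v y H1 Hm y' H2). Qed.

Definition PADD : recf := RPrimRec (RProj 0) (RComp RSucc [RProj 1]).
Definition PMUL : recf := RPrimRec RZero (RComp PADD [RProj 1; RProj 2]).
Definition PPRED : recf := RPrimRec RZero (RProj 0).
Definition PSUBR : recf := RPrimRec (RProj 0) (RComp PPRED [RProj 1]).
Definition PTRI : recf := RPrimRec RZero (RComp PADD [RProj 1; RComp RSucc [RProj 0]]).

Lemma padd_ok n m : reval PADD [n; m] (n + m).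
Proof.
  induction n; simpl.
  - apply ev_prec0. apply (ev_proj 0 [m]). simpl; lia.
  - eapply ev_precS; [exact IHn|]. eapply ev_comp.
    + apply evs_cons; [apply (ev_proj 1 [n; n+m; m]); simpl; lia | apply evs_nil].
    + apply ev_succ.
Qed.

Lemma pmul_ok n m : reval PMUL [n; m] (n * m).
Proof.
  induction n; simpl.
  - apply ev_prec0. apply ev_zero.
  - eapply ev_precS; [exact IHn|]. eapply ev_comp.
    + apply evs_cons; [apply (ev_proj 1 [n; n*m; m]); simpl; lia|].
      apply evs_cons; [apply (ev_proj 2 [n; n*m; m]); simpl; lia | apply evs_nil].
    + replace (m + n * m) with (n * m + m) by lia. apply padd_ok.
Qed.

Lemma ppred_ok n : reval PPRED [n] (pred n).
Proof.
  induction n; simpl.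
  - apply ev_prec0. apply ev_zero.
  - eapply ev_precS. exact IHn. apply (ev_proj 0 [n; pred n]). simpl; lia.
Qed.

Lemma psubr_ok b a : reval PSUBR [b; a] (a - b).
Proof.
  induction b; simpl.
  - apply ev_prec0. replace (a - 0) with a by lia. apply (ev_proj 0 [a]). simpl; lia.
  - eapply ev_precS; [exact IHb|]. eapply ev_comp.
    + apply evs_cons; [apply (ev_proj 1 [b; a - b; a]); simpl; lia | apply evs_nil].
    + replace (a - S b) with (pred (a - b)) by lia. apply ppred_ok.
Qed.

Fixpoint tri (s : nat) : nat := match s with 0 => 0 | S s' => tri s' + S s' end.

Lemma ptri_ok s : reval PTRI [s] (tri s).
Proof.
  induction s; simpl.
  - apply ev_prec0. apply ev_zero.
  - eapply ev_precS; [exact IHs|]. eapply ev_comp.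
    + apply evs_cons; [apply (ev_proj 1 [s; tri s]); simpl; lia|].
      apply evs_cons; [|apply evs_nil]. eapply ev_comp.
      * apply evs_cons; [apply (ev_proj 0 [s; tri s]); simpl; lia | apply evs_nil].
      * apply ev_succ.
    + apply padd_ok.
Qed.

Lemma tri_double s : 2 * tri s = s * (s + 1).
Proof. induction s; simpl; lia. Qed.

Lemma cpair_tri a b : cpair a b = tri (a + b) + b.
Proof.
  unfold cpair. f_equal. pose proof (tri_double (a + b)).
  rewrite <- H. rewrite Nat.mul_comm. apply Nat.div_mul. lia.
Qed.

Lemma cpair_ge_l a b : a <= cpair a b.
Proof. rewrite cpair_tri. assert (forall s, s <= tri s) by (induction s; simpl; lia).
  specialize (H (a+b)). lia. Qed.
Lemma cpair_ge_r a b : b <= cpair a b.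
Proof. rewrite cpair_tri. lia. Qed.

Lemma tri_mono s s' : s < s' -> tri s + s < tri s'.
Proof. induction 1; simpl; lia. Qed.

Lemma cpair_inj a b a' b' : cpair a b = cpair a' b' -> a = a' /\ b = b'.
Proof.
  rewrite !cpair_tri. intros H.
  destruct (lt_eq_lt_dec (a + b) (a' + b')) as [[Hl|He]|Hl].
  - pose proof (tri_mono _ _ Hl). lia.
  - rewrite He in H. lia.
  - pose proof (tri_mono _ _ Hl). lia.
Qed.

Inductive aexp : Type :=
| AVar (i : nat) | AConst (k : nat) | ASucc (a : aexp)
| AAdd (a b : aexp) | AMul (a b : aexp) | ASub (a b : aexp) | ACp (a b : aexp)
| ASum (b e : aexp).

Fixpoint bsum (g : nat -> nat) (m : nat) : nat :=
  match m with 0 => g 0 | S m' => bsum g m' + g (S m') end.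

Fixpoint eval (e : aexp) (v : list nat) : nat :=
  match e with
  | AVar i => nth i v 0
  | AConst k => k
  | ASucc a => S (eval a v)
  | AAdd a b => eval a v + eval b v
  | AMul a b => eval a v * eval b v
  | ASub a b => eval a v - eval b v
  | ACp a b => cpair (eval a v) (eval b v)
  | ASum b e => bsum (fun i => eval e (i :: v)) (eval b v)
  end.

Fixpoint wf (e : aexp) (k : nat) : Prop :=
  match e with
  | AVar i => i < k
  | AConst _ => True
  | ASucc a => wf a k
  | AAdd a b | AMul a b | ASub a b | ACp a b => wf a k /\ wf b k
  | ASum b e => wf b k /\ wf e (S k)
  end.

Fixpoint pconst (k : nat) : recf :=
  match k with 0 => RZero | S k' => RComp RSucc [pconst k'] end.

Fixpoint projs (s k : nat) : list recf :=
  match k with 0 => [] | S k' => RProj s :: projs (S s) k' end.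

Definition BSUM (P : recf) (k : nat) : recf :=
  RPrimRec (RComp P (pconst 0 :: projs 0 k))
           (RComp PADD [RProj 1; RComp P (RComp RSucc [RProj 0] :: projs 2 k)]).

Fixpoint compile (e : aexp) (k : nat) : recf :=
  match e with
  | AVar i => RProj i
  | AConst c => pconst c
  | ASucc a => RComp RSucc [compile a k]
  | AAdd a b => RComp PADD [compile a k; compile b k]
  | AMul a b => RComp PMUL [compile a k; compile b k]
  | ASub a b => RComp PSUBR [compile b k; compile a k]
  | ACp a b => RComp PADD [RComp PTRI [RComp PADD [compile a k; compile b k]]; compile b k]
  | ASum b e => RComp (BSUM (compile e (S k)) k) (compile b k :: projs 0 k)
  end.

Lemma pconst_ok c v : reval (pconst c) v c.
Proof. induction c; simpl. apply ev_zero. eapply ev_comp. apply evs_cons; [exact IHc| apply evs_nil]. apply ev_succ. Qed.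

Lemma projs_ok : forall v pre, revals (projs (length pre) (length v)) (pre ++ v) v.
Proof.
  induction v as [|x v IH]; intros pre; simpl. apply evs_nil.
  apply evs_cons.
  - replace x with (nth (length pre) (pre ++ x :: v) 0) at 2.
    + apply ev_proj. rewrite length_app; simpl; lia.
    + rewrite app_nth2 by lia. rewrite Nat.sub_diag. reflexivity.
  - specialize (IH (pre ++ [x])). rewrite length_app in IH. simpl in IH.
    replace (length pre + 1) with (S (length pre)) in IH by lia.
    rewrite <- app_assoc in IH. exact IH.
Qed.

Lemma projs0_ok v : revals (projs 0 (length v)) v v.
Proof. exact (projs_ok v []). Qed.

Lemma comp1 f g v a y : reval g v a -> reval f [a] y -> reval (RComp f [g]) v y.
Proof. intros. eapply ev_comp; eauto. apply evs_cons; auto. apply evs_nil. Qed.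
Lemma comp2 f g h v a b y : reval g v a -> reval h v b -> reval f [a; b] y ->
  reval (RComp f [g; h]) v y.
Proof. intros. eapply ev_comp; eauto. repeat (apply evs_cons; auto). apply evs_nil. Qed.

Lemma bsum_ok P k g : forall v, length v = k ->
  (forall i, reval P (i :: v) (g i)) -> forall m, reval (BSUM P k) (m :: v) (bsum g m).
Proof.
  intros v Hk HP m. induction m; simpl.
  - apply ev_prec0. eapply ev_comp; [|apply HP]. apply evs_cons. apply pconst_ok.
    subst k. apply projs0_ok.
  - eapply ev_precS; [exact IHm|]. eapply comp2.
    + apply (ev_proj 1 (m :: bsum g m :: v)). simpl; lia.
    + eapply ev_comp; [|apply HP]. apply evs_cons.
      * eapply comp1; [apply (ev_proj 0 (m :: bsum g m :: v)); simpl; lia|]. apply ev_succ.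
      * subst k. exact (projs_ok v [m; bsum g m]).
    + simpl. apply padd_ok.
Qed.

Theorem compile_ok : forall e k v, length v = k -> wf e k -> reval (compile e k) v (eval e v).
Proof.
  induction e; intros kk v Hk Hw; simpl in *.
  - apply ev_proj. lia.
  - apply pconst_ok.
  - eapply comp1; [apply (IHe kk); auto|]. apply ev_succ.
  - destruct Hw. eapply comp2; [apply IHe1|apply IHe2|]; eauto. apply padd_ok.
  - destruct Hw. eapply comp2; [apply IHe1|apply IHe2|]; eauto. apply pmul_ok.
  - destruct Hw. eapply comp2; [apply IHe2|apply IHe1|]; eauto. apply psubr_ok.
  - destruct Hw. rewrite cpair_tri. eapply comp2; [|apply IHe2; eauto|apply padd_ok].
    eapply comp1; [|apply ptri_ok]. eapply comp2; [apply IHe1|apply IHe2|apply padd_ok]; eauto.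
  - destruct Hw as [Hb He]. eapply ev_comp.
    + apply evs_cons. apply IHe1; eauto. subst kk. apply projs0_ok.
    + apply bsum_ok; auto. intros i. apply IHe2; simpl; auto.
Qed.

Lemma projs_mufree s k : mufreel (projs s k).
Proof. revert s; induction k; simpl; auto. Qed.
Lemma pconst_mufree c : mufree (pconst c).
Proof. induction c; simpl; auto. Qed.

Theorem compile_mufree : forall e kk, mufree (compile e kk).
Proof.
  induction e; intros kk; simpl; repeat split; auto using pconst_mufree, projs_mufree.
  all: try apply projs_mufree.
Qed.

Definition base (z y x z' y' x' : nat) : list sentence :=
  [SLt z y; SLt x z; SLt z' y'; SLt x' z'].
Definition extra (c z y z' y' : nat) : list sentence :=
  match c with 2 => [SLt z z'] | 3 => [SLt y y'] | 4 => [SLt z' z] | 5 => [SLt y' y] | _ => [] end.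
Definition outs (c e e' : nat) : sentence :=
  match c with 0 => SEq e e' | 1 => SNeq e e' | 2 | 3 => SLt e e' | _ => SNlt e e' end.
Definition cond (c z y z' y' : nat) : Prop :=
  match c with
  | 0 | 6 => z = z' /\ y = y'
  | 1 => ~ (z = z' /\ y = y')
  | 3 | 5 => z = z'
  | 2 | 4 => True
  | _ => False
  end.

Definition Gop : enum_op := fun alpha phi =>
  exists c z y x z' y' x', y < x /\ y' < x' /\ cond c z y z' y' /\
    alpha = base z y x z' y' x' ++ extra c z y z' y' /\
    phi = outs c (cpair z y) (cpair z' y').

Definition ASent (t : nat) (a b : aexp) := ACp (AConst t) (ACp a b).
Fixpoint AL (l : list aexp) : aexp :=
  match l with [] => AConst 0 | s :: l' => ASucc (ACp s (AL l')) end.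
Definition IEQ a b := ASub (AConst 1) (AAdd (ASub a b) (ASub b a)).
Definition ILT a b := ASub (AConst 1) (ASub (AConst 1) (ASub b a)).

Section Body.
Variables (xp yp zp x y z n : aexp).
Definition basee := [ASent 2 z y; ASent 2 x z; ASent 2 zp yp; ASent 2 xp zp].
Definition extrae (c : nat) : list aexp :=
  match c with 2 => [ASent 2 z zp] | 3 => [ASent 2 y yp] | 4 => [ASent 2 zp z]
  | 5 => [ASent 2 yp y] | _ => [] end.
Definition outexp (c : nat) : aexp :=
  let t := match c with 0 => 0 | 1 => 1 | 2 | 3 => 2 | _ => 3 end in
  ASent t (ACp z y) (ACp zp yp).
Definition condexp (c : nat) : aexp :=
  match c with
  | 0 | 6 => AMul (IEQ z zp) (IEQ y yp)
  | 1 => ASub (AConst 1) (AMul (IEQ z zp) (IEQ y yp))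
  | 3 | 5 => IEQ z zp
  | _ => AConst 1
  end.
Definition caseexp (c : nat) : aexp :=
  AMul (AMul (AMul (ILT y x) (ILT yp xp)) (condexp c))
       (IEQ (ACp (AL (basee ++ extrae c)) (outexp c)) n).
Definition bodyexp : aexp :=
  AAdd (caseexp 0) (AAdd (caseexp 1) (AAdd (caseexp 2) (AAdd (caseexp 3)
    (AAdd (caseexp 4) (AAdd (caseexp 5) (caseexp 6)))))).
End Body.

Definition CHECK : aexp :=
  ASum (AVar 1) (ASum (AVar 2) (ASum (AVar 3) (ASum (AVar 4) (ASum (AVar 5) (ASum (AVar 6)
    (bodyexp (AVar 0) (AVar 1) (AVar 2) (AVar 3) (AVar 4) (AVar 5) (AVar 7))))))).

Definition Fprog : recf := RMu (compile (ASub (AConst 1) CHECK) 2).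

Lemma bsum_pos g m : 0 < bsum g m <-> exists i, i <= m /\ 0 < g i.
Proof.
  induction m; simpl.
  - split. intros; exists 0; auto. intros [i [Hi Hg]]. replace i with 0 in Hg by lia. auto.
  - split.
    + intros H. destruct (Nat.eq_dec (g (S m)) 0).
      * assert (0 < bsum g m) by lia. apply IHm in H0 as [i [Hi Hg]]. exists i; split; auto.
      * exists (S m); split; auto; lia.
    + intros [i [Hi Hg]]. destruct (Nat.eq_dec i (S m)). subst; lia.
      assert (0 < bsum g m) by (apply IHm; exists i; split; auto; lia). lia.
Qed.

Lemma mul_pos a b : 0 < a * b <-> 0 < a /\ 0 < b.
Proof. split. intros H. destruct a, b; simpl in *; lia. intros [H1 H2]. apply Nat.mul_pos_pos; auto. Qed.

Section Ev.
Variables (xp yp zp x y z n : aexp) (env : list nat).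
Notation E a := (eval a env).

Lemma code_eval c :
  eval (ACp (AL (basee xp yp zp x y z ++ extrae yp zp y z c)) (outexp yp zp y z c)) env =
  cpair (code_list (base (E z) (E y) (E x) (E zp) (E yp) (E xp) ++ extra c (E z) (E y) (E zp) (E yp)))
        (code_sentence (outs c (cpair (E z) (E y)) (cpair (E zp) (E yp)))).
Proof. destruct c as [|[|[|[|[|[|[|c]]]]]]]; reflexivity. Qed.

Lemma ieq_pos a b : 0 < eval (IEQ a b) env <-> E a = E b.
Proof. unfold IEQ; cbn [eval]. lia. Qed.
Lemma ilt_pos a b : 0 < eval (ILT a b) env <-> E a < E b.
Proof. unfold ILT; cbn [eval]. lia. Qed.

Lemma cond_pos c : c <= 6 -> (0 < eval (condexp yp zp y z c) env <-> cond c (E z) (E y) (E zp) (E yp)).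
Proof.
  intros Hc.
  destruct c as [|[|[|[|[|[|[|c]]]]]]]; unfold condexp, cond; cbn [eval].
  - rewrite mul_pos, !ieq_pos. tauto.
  - rewrite <- (ieq_pos z zp), <- (ieq_pos y yp). unfold IEQ; cbn [eval].
    rewrite <- !(Nat.lt_0_mul').  lia.
  - lia.
  - rewrite ieq_pos. tauto.
  - lia.
  - rewrite ieq_pos. tauto.
  - rewrite mul_pos, !ieq_pos. tauto.
  - lia.
Qed.
End Ev.

Lemma eval_mul a b env : eval (AMul a b) env = eval a env * eval b env.
Proof. reflexivity. Qed.
Lemma eval_add a b env : eval (AAdd a b) env = eval a env + eval b env.
Proof. reflexivity. Qed.

Lemma case_pos xp yp zp x y z n env c : c <= 6 ->
  (0 < eval (caseexp xp yp zp x y z n c) env <->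
   eval y env < eval x env /\ eval yp env < eval xp env /\
   cond c (eval z env) (eval y env) (eval zp env) (eval yp env) /\
   cpair (code_list (base (eval z env) (eval y env) (eval x env) (eval zp env) (eval yp env) (eval xp env)
                     ++ extra c (eval z env) (eval y env) (eval zp env) (eval yp env)))
         (code_sentence (outs c (cpair (eval z env) (eval y env)) (cpair (eval zp env) (eval yp env))))
   = eval n env).
Proof.
  intros Hc. unfold caseexp. rewrite !eval_mul, !mul_pos, !ilt_pos, cond_pos by auto.
  rewrite ieq_pos, code_eval. tauto.
Qed.

Lemma body_pos xp yp zp x y z n env :
  0 < eval (bodyexp xp yp zp x y z n) env <->
  exists c, c <= 6 /\ 0 < eval (caseexp xp yp zp x y z n c) env.
Proof.
  unfold bodyexp. rewrite !eval_add.
  set (a0 := eval (caseexp xp yp zp x y z n 0) env).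
  set (a1 := eval (caseexp xp yp zp x y z n 1) env).
  set (a2 := eval (caseexp xp yp zp x y z n 2) env).
  set (a3 := eval (caseexp xp yp zp x y z n 3) env).
  set (a4 := eval (caseexp xp yp zp x y z n 4) env).
  set (a5 := eval (caseexp xp yp zp x y z n 5) env).
  set (a6 := eval (caseexp xp yp zp x y z n 6) env).
  split.
  - intros H.
    assert (0 < a0 \/ 0 < a1 \/ 0 < a2 \/ 0 < a3 \/ 0 < a4 \/ 0 < a5 \/ 0 < a6) as HH by lia.
    destruct HH as [h|[h|[h|[h|[h|[h|h]]]]]];
      [exists 0|exists 1|exists 2|exists 3|exists 4|exists 5|exists 6]; split; auto; lia.
  - intros [c [Hc H]].
    destruct c as [|[|[|[|[|[|[|c]]]]]]]; fold a0 a1 a2 a3 a4 a5 a6 in H; lia.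
Qed.

Lemma le_cp_l a b c : a <= b -> a <= cpair b c.
Proof. pose proof (cpair_ge_l b c). lia. Qed.
Lemma le_cp_r a b c : a <= c -> a <= cpair b c.
Proof. pose proof (cpair_ge_r b c). lia. Qed.

Lemma code_bound z y x z' y' x' l phi :
  let n := cpair (code_list (base z y x z' y' x' ++ l)) (code_sentence phi) in
  z <= n /\ y <= n /\ x <= n /\ z' <= n /\ y' <= n /\ x' <= n.
Proof.
  intros n. subst n. unfold base. simpl code_list. unfold code_sentence at 1 2 3 4.
  repeat split; apply le_cp_l; eauto 14 using le_cp_l, le_cp_r, le_S, le_n.
Qed.

Lemma eval_sum b e env : eval (ASum b e) env = bsum (fun i => eval e (i :: env)) (eval b env).
Proof. reflexivity. Qed.

Lemma check_pos k n : 0 < eval CHECK [k; n] <->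
  exists alpha phi, Gop alpha phi /\ n = cpair (code_list alpha) (code_sentence phi).
Proof.
  unfold CHECK. split.
  - intros H.
    rewrite eval_sum, bsum_pos in H; destruct H as [z [_ H]].
    rewrite eval_sum, bsum_pos in H; destruct H as [y [_ H]].
    rewrite eval_sum, bsum_pos in H; destruct H as [x [_ H]].
    rewrite eval_sum, bsum_pos in H; destruct H as [z' [_ H]].
    rewrite eval_sum, bsum_pos in H; destruct H as [y' [_ H]].
    rewrite eval_sum, bsum_pos in H; destruct H as [x' [_ H]].
    rewrite body_pos in H. destruct H as [c [Hc H]]. rewrite case_pos in H by auto.
    cbn [eval nth] in H. destruct H as [H1 [H2 [H3 H4]]].
    eexists; eexists; split; [|symmetry; exact H4].
    exists c, z, y, x, z', y', x'. repeat split; auto.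
  - intros [alpha [phi [HG Hn]]].
    destruct HG as (c & z & y & x & z' & y' & x' & H1 & H2 & H3 & H4 & H5).
    subst alpha phi.
    destruct (code_bound z y x z' y' x' (extra c z y z' y') (outs c (cpair z y) (cpair z' y')))
      as [Bz [By [Bx [Bz' [By' Bx']]]]].
    rewrite <- Hn in *.
    rewrite eval_sum, bsum_pos; exists z; split; [cbn; lia|].
    rewrite eval_sum, bsum_pos; exists y; split; [cbn; lia|].
    rewrite eval_sum, bsum_pos; exists x; split; [cbn; lia|].
    rewrite eval_sum, bsum_pos; exists z'; split; [cbn; lia|].
    rewrite eval_sum, bsum_pos; exists y'; split; [cbn; lia|].
    rewrite eval_sum, bsum_pos; exists x'; split; [cbn; lia|].
    rewrite body_pos. assert (Hc : c <= 6).
    { destruct c as [|[|[|[|[|[|[|c]]]]]]]; simpl in H3; auto; lia. }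
    exists c; split; auto. rewrite case_pos by auto. cbn [eval nth].
    repeat split; auto.
Qed.

Lemma mu_inv f v n : reval (RMu f) v n -> reval f (n :: v) 0.
Proof. intros H; inversion H; auto. Qed.

Theorem Gop_ce : ce_op Gop.
Proof.
  unfold ce_op, ce. exists Fprog. intros n. rewrite <- (check_pos 0 n). split.
  - intros H. exists 0. unfold Fprog. apply ev_mu.
    + assert (E : eval (ASub (AConst 1) CHECK) [0; n] = 0) by (cbn [eval]; lia).
      assert (W : wf (ASub (AConst 1) CHECK) 2) by (simpl; repeat split; lia).
      pose proof (compile_ok _ 2 [0; n] eq_refl W) as R. rewrite E in R. exact R.
    + intros m Hm; lia.
  - intros [y Hy]. unfold Fprog in Hy. apply mu_inv in Hy.
    assert (E := compile_ok (ASub (AConst 1) CHECK) 2 [y; n] eq_refl).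
    assert (W : wf (ASub (AConst 1) CHECK) 2) by (simpl; repeat split; lia).
    specialize (E W).
    pose proof (reval_det _ _ _ _ (compile_mufree _ _) Hy E) as D.
    cbn [eval] in D. rewrite (check_pos 0 n), <- (check_pos y n). lia.
Qed.

Definition gdom (S : str) (e : nat) : Prop :=
  exists z y x, e = cpair z y /\ dom S z /\ dom S y /\ dom S x /\ rel S z y /\ rel S x z /\ y < x.
Definition grel (S : str) (e e' : nat) : Prop :=
  exists z y z' y', e = cpair z y /\ e' = cpair z' y' /\ (rel S z z' \/ (z = z' /\ rel S y y')).
Definition Gs (S : str) : str := mkStr (gdom S) (grel S).

Definition slo (S : str) : Prop :=
  (forall a, dom S a -> ~ rel S a a) /\
  (forall a b c, dom S a -> dom S b -> dom S c -> rel S a b -> rel S b c -> rel S a c) /\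
  (forall a b, dom S a -> dom S b -> a <> b -> rel S a b \/ rel S b a).

Lemma grel_dec S z y z' y' : grel S (cpair z y) (cpair z' y') <->
  (rel S z z' \/ (z = z' /\ rel S y y')).
Proof.
  split.
  - intros (z0 & y0 & z1 & y1 & E1 & E2 & H).
    apply cpair_inj in E1 as [-> ->]. apply cpair_inj in E2 as [-> ->]. exact H.
  - intros H. exists z, y, z', y'. auto.
Qed.

Lemma gdom_dec S z y : gdom S (cpair z y) <->
  dom S z /\ dom S y /\ rel S z y /\ exists x, dom S x /\ rel S x z /\ y < x.
Proof.
  split.
  - intros (z0 & y0 & x & E & H1 & H2 & H3 & H4 & H5 & H6).
    apply cpair_inj in E as [-> ->]. repeat split; auto. exists x; auto.
  - intros (H1 & H2 & H3 & x & H4 & H5 & H6). exists z, y, x. repeat split; auto.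
Qed.

Lemma apply_Gop S : slo S -> forall phi,
  apply_op Gop (diagram S) phi <-> diagram (Gs S) phi.
Proof.
  intros [Hirr [Htr Htot]] phi. unfold apply_op, diagram. split.
  - intros [alpha [HG Hal]].
    destruct HG as (c & z & y & x & z' & y' & x' & Hyx & Hyx' & Hc & -> & ->).
    assert (F : forall psi, In psi (base z y x z' y' x') -> holds S psi)
      by (intros; apply Hal; apply in_or_app; auto).
    assert (A1 := F (SLt z y) ltac:(simpl; auto)).
    assert (A2 := F (SLt x z) ltac:(simpl; auto)).
    assert (A3 := F (SLt z' y') ltac:(simpl; auto)).
    assert (A4 := F (SLt x' z') ltac:(simpl; auto)).
    simpl in A1, A2, A3, A4.
    assert (D1 : gdom S (cpair z y)) by (apply gdom_dec; intuition; exists x; intuition).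
    assert (D2 : gdom S (cpair z' y')) by (apply gdom_dec; intuition; exists x'; intuition).
    assert (FE : forall psi, In psi (extra c z y z' y') -> holds S psi)
      by (intros; apply Hal; apply in_or_app; auto).
    destruct c as [|[|[|[|[|[|[|c]]]]]]]; simpl in Hc |- *.
    + destruct Hc; subst; auto.
    + repeat split; auto. intros E; apply cpair_inj in E; tauto.
    + assert (B := FE (SLt z z') ltac:(simpl; auto)). simpl in B.
      repeat split; auto. apply grel_dec; tauto.
    + assert (B := FE (SLt y y') ltac:(simpl; auto)). simpl in B.
      repeat split; auto. apply grel_dec; tauto.
    + assert (B := FE (SLt z' z) ltac:(simpl; auto)). simpl in B.
      repeat split; auto. rewrite grel_dec. intros [H|[<- H]].
      * apply (Hirr z); intuition. apply (Htr z z' z); intuition.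
      * apply (Hirr z); intuition.
    + assert (B := FE (SLt y' y) ltac:(simpl; auto)). simpl in B. subst z'.
      repeat split; auto. rewrite grel_dec. intros [H|[_ H]].
      * apply (Hirr z); intuition.
      * apply (Hirr y); intuition. apply (Htr y y' y); intuition.
    + destruct Hc; subst. repeat split; auto. rewrite grel_dec. intros [H|[_ H]].
      * apply (Hirr z'); intuition.
      * apply (Hirr y'); intuition.
    + destruct Hc.
  - assert (Sub : forall c z y x z' y' x' phi, y < x -> y' < x' -> cond c z y z' y' ->
        phi = outs c (cpair z y) (cpair z' y') ->
        (forall psi, In psi (base z y x z' y' x' ++ extra c z y z' y') -> holds S psi) ->
        exists alpha, Gop alpha phi /\ (forall psi, In psi alpha -> holds S psi)).
    { intros. eexists; split; [|eassumption]. exists c, z, y, x, z', y', x'. auto. }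
    destruct phi as [a b|a b|a b|a b]; simpl.
    + intros (Da & Db & <-).
      destruct Da as (z & y & x & -> & H1 & H2 & H3 & H4 & H5 & H6).
      apply (Sub 0 z y x z y x); simpl; auto.
      intros psi Hin. simpl in Hin.
      repeat (destruct Hin as [<-|Hin]; [simpl; tauto|]). destruct Hin.
    + intros (Da & Db & Hne).
      destruct Da as (z & y & x & -> & H1 & H2 & H3 & H4 & H5 & H6).
      destruct Db as (z' & y' & x' & -> & H1' & H2' & H3' & H4' & H5' & H6').
      apply (Sub 1 z y x z' y' x'); simpl; auto.
      * intros [-> ->]; auto.
      * intros psi Hin. simpl in Hin.
        repeat (destruct Hin as [<-|Hin]; [simpl; tauto|]). destruct Hin.
    + intros (Da & Db & Hr).
      destruct Da as (z & y & x & -> & H1 & H2 & H3 & H4 & H5 & H6).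
      destruct Db as (z' & y' & x' & -> & H1' & H2' & H3' & H4' & H5' & H6').
      apply grel_dec in Hr. destruct Hr as [Hr|[<- Hr]].
      * apply (Sub 2 z y x z' y' x'); simpl; auto.
        intros psi Hin. simpl in Hin.
        repeat (destruct Hin as [<-|Hin]; [simpl; tauto|]). destruct Hin.
      * apply (Sub 3 z y x z y' x'); simpl; auto.
        intros psi Hin. simpl in Hin.
        repeat (destruct Hin as [<-|Hin]; [simpl; tauto|]). destruct Hin.
    + intros (Da & Db & Hr).
      destruct Da as (z & y & x & -> & H1 & H2 & H3 & H4 & H5 & H6).
      destruct Db as (z' & y' & x' & -> & H1' & H2' & H3' & H4' & H5' & H6').
      rewrite grel_dec in Hr.
      destruct (Nat.eq_dec z z') as [<-|Hz].
      * destruct (Nat.eq_dec y y') as [<-|Hy].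
        -- apply (Sub 6 z y x z y x'); simpl; auto.
           intros psi Hin. simpl in Hin.
           repeat (destruct Hin as [<-|Hin]; [simpl; tauto|]). destruct Hin.
        -- destruct (Htot y y' H2 H2' Hy) as [Hl|Hl]; [tauto|].
           apply (Sub 5 z y x z y' x'); simpl; auto.
           intros psi Hin. simpl in Hin.
           repeat (destruct Hin as [<-|Hin]; [simpl; tauto|]). destruct Hin.
      * destruct (Htot z z' H1 H1' Hz) as [Hl|Hl]; [tauto|].
        apply (Sub 4 z y x z' y' x'); simpl; auto.
        intros psi Hin. simpl in Hin.
        repeat (destruct Hin as [<-|Hin]; [simpl; tauto|]). destruct Hin.
Qed.

Lemma iso_to_slo S T R : iso_to S T R ->
  (forall t, ~ R t t) -> (forall a b c, R a b -> R b c -> R a c) ->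
  (forall a b, a <> b -> R a b \/ R b a) -> slo S.
Proof.
  intros (f & Hinj & Hsur & Hrel) H1 H2 H3. repeat split.
  - intros a Ha H. apply (H1 (f a)). apply Hrel; auto.
  - intros a b c Ha Hb Hc Hab Hbc. apply Hrel; auto. apply Hrel in Hab; auto.
    apply Hrel in Hbc; auto. eauto.
  - intros a b Ha Hb Hne. destruct (H3 (f a) (f b)) as [H|H].
    + intros E. apply Hne. apply Hinj; auto.
    + left. apply Hrel; auto.
    + right. apply Hrel; auto.
Qed.

Lemma diag_dom X Y : (forall phi, diagram X phi <-> diagram Y phi) ->
  forall a, dom X a <-> dom Y a.
Proof. intros H a. specialize (H (SEq a a)). simpl in H. split; intros; apply H; auto. Qed.

Lemma diag_rel X Y : (forall phi, diagram X phi <-> diagram Y phi) ->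
  forall a b, dom X a -> dom X b -> (rel X a b <-> rel Y a b).
Proof. intros H a b Ha Hb. pose proof (diag_dom X Y H a). pose proof (diag_dom X Y H b).
  specialize (H (SLt a b)). simpl in H. tauto. Qed.

Lemma diag_iso_to X Y T R : (forall phi, diagram X phi <-> diagram Y phi) ->
  iso_to Y T R -> iso_to X T R.
Proof.
  intros H (f & Hinj & Hsur & Hrel). pose proof (diag_dom X Y H) as HD.
  exists f. repeat split.
  - intros a b Ha Hb. apply Hinj; apply HD; auto.
  - intros t. destruct (Hsur t) as [x [Hx Hf]]. exists x. split; auto. apply HD; auto.
  - intros Hr. apply Hrel; try apply HD; auto. apply (diag_rel X Y H); auto.
  - intros Hr. apply (diag_rel X Y H); auto. apply Hrel; try apply HD; auto.
Qed.

Lemma iso_to_inv S T R : iso_to S T R -> exists f g,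
  (forall x y, dom S x -> dom S y -> f x = f y -> x = y) /\
  (forall t, dom S (g t) /\ f (g t) = t) /\
  (forall x, dom S x -> g (f x) = x) /\
  (forall x y, dom S x -> dom S y -> (rel S x y <-> R (f x) (f y))).
Proof.
  intros (f & Hinj & Hsur & Hrel).
  exists f, (fun t => proj1_sig (constructive_indefinite_description _ (Hsur t))).
  repeat split; auto.
  - exact (proj1 (proj2_sig (constructive_indefinite_description _ (Hsur t)))).
  - exact (proj2 (proj2_sig (constructive_indefinite_description _ (Hsur t)))).
  - intros x Hx. destruct (constructive_indefinite_description _ (Hsur (f x))) as [y [Hy Hf]].
    simpl. apply Hinj; auto.
  - apply Hrel; auto.
  - apply Hrel; auto.
Qed.

Lemma iso_to_iso A B T R : iso_to A T R -> iso_to B T R -> iso A B.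
Proof.
  intros HA HB. destruct (iso_to_inv _ _ _ HA) as (fa & ga & Ia & Ga & GFa & Ra).
  destruct (iso_to_inv _ _ _ HB) as (fb & gb & Ib & Gb & GFb & Rb).
  exists (fun x => gb (fa x)). repeat split.
  - intros x Hx. apply Gb.
  - intros x y Hx Hy E. apply Ia; auto.
    rewrite <- (proj2 (Gb (fa x))), <- (proj2 (Gb (fa y))). rewrite E. auto.
  - intros y Hy. exists (ga (fb y)). split. apply Ga. rewrite (proj2 (Ga _)). apply GFb; auto.
  - intros Hr. apply Rb; try apply Gb. rewrite (proj2 (Gb _)), (proj2 (Gb _)). apply Ra; auto.
  - intros Hr. apply Rb in Hr; try apply Gb. rewrite (proj2 (Gb _)), (proj2 (Gb _)) in Hr.
    apply Ra; auto.
Qed.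

Definition has_least (S : str) : Prop :=
  exists a, dom S a /\ forall b, dom S b -> b <> a -> rel S a b.

Lemma iso_least A B : iso A B -> has_least A -> has_least B.
Proof.
  intros (f & Hd & Hinj & Hsur & Hrel) (a & Ha & H).
  exists (f a). split; auto. intros b Hb Hne.
  destruct (Hsur b Hb) as [x [Hx <-]]. apply Hrel; auto.
Qed.

Lemma iso_to_least S T R : iso_to S T R ->
  (has_least S <-> exists t, forall t', t' <> t -> R t t').
Proof.
  intros HS. destruct (iso_to_inv _ _ _ HS) as (f & g & I & G & GF & Rl). split.
  - intros (a & Ha & H). exists (f a). intros t' Hne.
    rewrite <- (proj2 (G t')). apply Rl; auto. apply G. apply H. apply G.
    intros E. apply Hne. rewrite <- E. symmetry. apply (proj2 (G t')).
  - intros [t H]. exists (g t). split. apply G. intros b Hb Hne.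
    apply Rl; auto. apply G. rewrite (proj2 (G t)). apply H.
    intros E. apply Hne. rewrite <- E. symmetry. auto.
Qed.

Lemma nat_min (Q : nat -> Prop) n : Q n -> exists m, Q m /\ forall k, Q k -> m <= k.
Proof.
  induction n as [n IH] using lt_wf_ind. intros Hn.
  destruct (classic (exists k, k < n /\ Q k)) as [[k [Hk Qk]]|Hno].
  - apply (IH k Hk Qk).
  - exists n. split; auto. intros k Qk. destruct (le_lt_dec n k); auto.
    exfalso; apply Hno; eauto.
Qed.

Lemma exact_list (Q : nat -> Prop) l : (forall b, Q b -> In b l) ->
  exists l', NoDup l' /\ forall b, In b l' <-> Q b.
Proof.
  revert Q. induction l as [|x l IH]; intros Q HQ.
  - exists []. split. constructor. intros b; split; [intros []|intros H; apply (HQ b H)].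
  - destruct (IH (fun b => Q b /\ b <> x)) as [l' [Hnd Hl']].
    { intros b [Hb Hne]. destruct (HQ b Hb); auto. congruence. }
    destruct (classic (Q x)) as [Hx|Hx].
    + exists (x :: l'). split.
      * constructor; auto. intros Hin. apply Hl' in Hin. tauto.
      * intros b. simpl. rewrite Hl'. split.
        -- intros [<-|[H _]]; auto.
        -- intros Hb. destruct (Nat.eq_dec x b); auto.
    + exists l'. split; auto. intros b. rewrite Hl'. split; [tauto|].
      intros Hb; split; auto. intros ->; auto.
Qed.

Lemma same_length (l1 l2 : list nat) : NoDup l1 -> NoDup l2 -> (forall b, In b l1 <-> In b l2) ->
  length l1 = length l2.
Proof.
  intros H1 H2 H. apply Nat.le_antisymm; apply NoDup_incl_length; auto;
  intros b; apply H.
Qed.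

Section Omega.
Variables (P : nat -> Prop) (R : nat -> nat -> Prop).
Hypothesis Hirr : forall a, P a -> ~ R a a.
Hypothesis Htr : forall a b c, P a -> P b -> P c -> R a b -> R b c -> R a c.
Hypothesis Htot : forall a b, P a -> P b -> a <> b -> R a b \/ R b a.
Hypothesis Hfin : forall a, P a -> exists l, forall b, P b -> R b a -> In b l.
Hypothesis Hne : exists a, P a.
Hypothesis Hnomax : forall a, P a -> exists b, P b /\ R a b.

Definition predl (a : nat) (l : list nat) : Prop := NoDup l /\ forall b, In b l <-> P b /\ R b a.

Definition hrank (a : nat) : nat :=
  match excluded_middle_informative (exists l, predl a l) with
  | left H => length (proj1_sig (constructive_indefinite_description _ H))
  | right _ => 0
  end.

Lemma hrank_spec a : P a -> exists l, predl a l /\ hrank a = length l.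
Proof.
  intros Ha. unfold hrank. destruct excluded_middle_informative as [H|H].
  - destruct (constructive_indefinite_description _ H) as [l Hl]. simpl. eauto.
  - exfalso. apply H. destruct (Hfin a Ha) as [l Hl].
    destruct (exact_list (fun b => P b /\ R b a) l) as [l' [H1 H2]].
    { intros b [Hb Hr]; auto. }
    exists l'. split; auto.
Qed.

Lemma hrank_lt a b : P a -> P b -> R a b -> hrank a < hrank b.
Proof.
  intros Ha Hb Hab. destruct (hrank_spec a Ha) as [la [[Na Ma] ->]].
  destruct (hrank_spec b Hb) as [lb [[Nb Mb] ->]].
  enough (length (a :: la) <= length lb) by (simpl in *; lia). apply NoDup_incl_length.
  - constructor; auto. intros Hin. apply Ma in Hin. apply (Hirr a); tauto.
  - intros c [<-|Hc]; apply Mb; auto. apply Ma in Hc. split; [tauto|].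
    apply (Htr c a b); tauto.
Qed.

Lemma hrank_iff a b : P a -> P b -> (R a b <-> hrank a < hrank b).
Proof.
  intros Ha Hb. split. apply hrank_lt; auto.
  intros Hlt. destruct (Nat.eq_dec a b) as [->|Hne']. lia.
  destruct (Htot a b Ha Hb Hne') as [H|H]; auto.
  apply hrank_lt in H; auto. lia.
Qed.

Lemma hrank_inj a b : P a -> P b -> hrank a = hrank b -> a = b.
Proof.
  intros Ha Hb E. destruct (Nat.eq_dec a b); auto.
  destruct (Htot a b Ha Hb n) as [H|H]; apply hrank_lt in H; auto; lia.
Qed.

Lemma hrank_surj n : exists a, P a /\ hrank a = n.
Proof.
  induction n as [|n IH].
  - destruct Hne as [a0 Ha0].
    destruct (nat_min (fun m => exists a, P a /\ hrank a = m) (hrank a0)) as [m [[a [Ha Hm]] Hmin]].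
    { eauto. }
    exists a. split; auto. destruct (hrank_spec a Ha) as [la [[Na Ma] Hl]].
    destruct la as [|b la]; [simpl in Hl; auto|].
    exfalso. assert (Hb : P b /\ R b a) by (apply Ma; simpl; auto).
    assert (hrank b < hrank a) by (apply hrank_lt; tauto).
    specialize (Hmin (hrank b) ltac:(exists b; split; tauto)). lia.
  - destruct IH as [a [Ha Hn]].
    destruct (Hnomax a Ha) as [b0 [Hb0 Hab0]].
    destruct (nat_min (fun m => exists c, P c /\ R a c /\ hrank c = m) (hrank b0))
      as [m [[c [Hc [Hac Hm]]] Hmin]].
    { eauto. }
    exists c. split; auto.
    destruct (hrank_spec a Ha) as [la [[Na Ma] Hla]].
    destruct (hrank_spec c Hc) as [lc [[Nc Mc] Hlc]].
    rewrite Hlc. rewrite <- Hn, Hla.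
    enough (length (a :: la) = length lc) by (simpl in *; lia). apply same_length; auto.
    + constructor; auto. intros Hin. apply Ma in Hin. apply (Hirr a); tauto.
    + intros d. simpl. rewrite Ma, Mc. split.
      * intros [<-|[Hd Hda]]; split; auto. apply (Htr d a c); auto.
      * intros [Hd Hdc]. destruct (Nat.eq_dec a d) as [|Hne']; auto. right.
        destruct (Htot a d Ha Hd Hne') as [H|H]; [|auto].
        exfalso. assert (hrank d < hrank c) by (apply hrank_lt; auto).
        specialize (Hmin (hrank d) ltac:(exists d; auto)). lia.
Qed.

Lemma omega_crit : exists h : nat -> nat,
  (forall a b, P a -> P b -> h a = h b -> a = b) /\
  (forall n, exists a, P a /\ h a = n) /\
  (forall a b, P a -> P b -> (R a b <-> h a < h b)).
Proof.
  exists hrank. split; [|split].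
  - apply hrank_inj.
  - apply hrank_surj.
  - apply hrank_iff.
Qed.
End Omega.

Lemma omega2_crit (X : str) (row : nat -> nat) :
  slo X ->
  (forall a b, dom X a -> dom X b -> rel X a b -> row a <= row b) ->
  (forall a, dom X a -> exists l, forall b, dom X b -> row b = row a -> rel X b a -> In b l) ->
  (forall r, exists a, dom X a /\ row a = r) ->
  (forall a, dom X a -> exists b, dom X b /\ row b = row a /\ rel X a b) ->
  iso_to X (nat * nat) lt_omegasq.
Proof.
  intros [Hirr [Htr Htot]] Hmon Hfin Hne Hnomax.
  assert (Hh : forall r, exists h : nat -> nat,
    (forall a b, (dom X a /\ row a = r) -> (dom X b /\ row b = r) -> h a = h b -> a = b) /\
    (forall n, exists a, (dom X a /\ row a = r) /\ h a = n) /\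
    (forall a b, (dom X a /\ row a = r) -> (dom X b /\ row b = r) -> (rel X a b <-> h a < h b))).
  { intros r. apply omega_crit.
    - intros a [Ha _]; auto.
    - intros a b c [Ha _] [Hb _] [Hc _]; eauto.
    - intros a b [Ha _] [Hb _]; auto.
    - intros a [Ha Hr]. destruct (Hfin a Ha) as [l Hl]. exists l.
      intros b [Hb Hrb] Hba. apply Hl; auto. congruence.
    - destruct (Hne r) as [a Ha]. eauto.
    - intros a [Ha Hr]. destruct (Hnomax a Ha) as [b [Hb [Hrb Hab]]].
      exists b. split; auto. split; auto. congruence. }
  set (hh := fun r => proj1_sig (constructive_indefinite_description _ (Hh r))).
  assert (HS : forall r, let h := hh r in
    (forall a b, (dom X a /\ row a = r) -> (dom X b /\ row b = r) -> h a = h b -> a = b) /\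
    (forall n, exists a, (dom X a /\ row a = r) /\ h a = n) /\
    (forall a b, (dom X a /\ row a = r) -> (dom X b /\ row b = r) -> (rel X a b <-> h a < h b))).
  { intros r. exact (proj2_sig (constructive_indefinite_description _ (Hh r))). }
  exists (fun a => (row a, hh (row a) a)). split; [|split].
  - intros a b Ha Hb E. injection E as E1 E2.
    destruct (HS (row a)) as [I _]. apply I; auto. rewrite E1 at 2. auto.
  - intros [r n]. destruct (HS r) as [_ [Su _]]. destruct (Su n) as [a [[Ha Hr] Hn]].
    exists a. split; auto. subst r. rewrite Hn. auto.
  - intros a b Ha Hb. unfold lt_omegasq; simpl. split.
    + intros Hab. pose proof (Hmon a b Ha Hb Hab) as Hle.
      destruct (Nat.eq_dec (row a) (row b)) as [E|E]; [|left; lia].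
      right. split; auto. destruct (HS (row a)) as [_ [_ O]].
      rewrite <- E. apply O; auto.
    + intros [Hlt|[E Hlt]].
      * destruct (Nat.eq_dec a b) as [->|Hne']; [lia|].
        destruct (Htot a b Ha Hb Hne') as [H|H]; auto.
        pose proof (Hmon b a Hb Ha H). lia.
      * destruct (HS (row a)) as [_ [_ O]]. apply O; auto. rewrite <- E in Hlt. auto.
Qed.

Definition unp (e : nat) : nat * nat :=
  match excluded_middle_informative (exists p : nat * nat, e = cpair (fst p) (snd p)) with
  | left H => proj1_sig (constructive_indefinite_description _ H)
  | right _ => (0, 0)
  end.

Lemma unp_cpair z y : unp (cpair z y) = (z, y).
Proof.
  unfold unp. destruct excluded_middle_informative as [H|H].
  - destruct (constructive_indefinite_description _ H) as [[a b] E]. simpl in *.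
    apply cpair_inj in E as [-> ->]. auto.
  - exfalso. apply H. exists (z, y). auto.
Qed.

Lemma slo_Gs S : slo S -> slo (Gs S).
Proof.
  intros [Hirr [Htr Htot]]. repeat split.
  - intros e He Hr. destruct He as (z & y & x & -> & Hz & Hy & _).
    simpl in Hr. apply grel_dec in Hr. destruct Hr as [H|[_ H]]; [apply (Hirr z)|apply (Hirr y)]; auto.
  - intros a b c Ha Hb Hc Hab Hbc.
    destruct Ha as (z1 & y1 & x1 & -> & Hz1 & Hy1 & _).
    destruct Hb as (z2 & y2 & x2 & -> & Hz2 & Hy2 & _).
    destruct Hc as (z3 & y3 & x3 & -> & Hz3 & Hy3 & _).
    simpl in Hab, Hbc |- *. apply grel_dec in Hab, Hbc. apply grel_dec.
    destruct Hab as [H1|[<- H1]]; destruct Hbc as [H2|[<- H2]]; eauto.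
  - intros a b Ha Hb Hne.
    destruct Ha as (z1 & y1 & x1 & -> & Hz1 & Hy1 & _).
    destruct Hb as (z2 & y2 & x2 & -> & Hz2 & Hy2 & _).
    simpl. rewrite !grel_dec.
    destruct (Nat.eq_dec z1 z2) as [<-|Hz].
    + destruct (Nat.eq_dec y1 y2) as [<-|Hy]; [congruence|].
      destruct (Htot y1 y2 Hy1 Hy2 Hy); auto.
    + destruct (Htot z1 z2 Hz1 Hz2 Hz); auto.
Qed.

Definition revs (X : str) : str := mkStr (dom X) (fun a b => rel X b a).

Lemma slo_rev X : slo X -> slo (revs X).
Proof.
  intros [Hirr [Htr Htot]]. repeat split; simpl.
  - auto.
  - intros a b c Ha Hb Hc H1 H2. eauto.
  - intros a b Ha Hb Hne. destruct (Htot a b Ha Hb Hne); auto.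
Qed.

Lemma iso_to_revs X : iso_to (revs X) (nat * nat) lt_omegasq ->
  iso_to X (nat * nat) (rev_ord lt_omegasq).
Proof.
  intros (h & I & Su & R). exists h. repeat split; auto.
  - intros Hr. apply (R y x); auto.
  - intros Hr. apply (R y x); auto.
Qed.

Lemma unbounded (u : nat -> nat) : (forall i j, u i = u j -> i = j) ->
  forall M, exists n, M < u n.
Proof.
  intros Hu M. apply NNPP. intros Hno.
  assert (Hle : forall n, u n <= M) by (intros n; destruct (le_lt_dec (u n) M); auto; exfalso; eauto).
  assert (length (map u (seq 0 (S (S M)))) <= length (seq 0 (S M))).
  { apply NoDup_incl_length.
    - apply NoDup_map_NoDup_ForallPairs. intros i j _ _; apply Hu. apply seq_NoDup.
    - intros v Hv. apply in_map_iff in Hv. destruct Hv as [n [<- _]].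
      apply in_seq. specialize (Hle n). lia. }
  rewrite length_map, !length_seq in H. lia.
Qed.

Fixpoint msum (g : nat -> nat) (i : nat) : nat :=
  match i with 0 => 0 | S i' => msum g i' + g i' end.
Lemma msum_ge g t i : t < i -> g t <= msum g i.
Proof. induction i; simpl; intros H. lia. destruct (Nat.eq_dec t i). subst; lia. specialize (IHi ltac:(lia)); lia. Qed.

Section W2.
Variables (St : str) (f : nat -> bool * nat) (g : bool * nat -> nat).
Hypothesis Hd : forall t, dom St (g t).
Hypothesis Hfg : forall t, f (g t) = t.
Hypothesis Hgf : forall x, dom St x -> g (f x) = x.
Hypothesis Hr : forall x y, dom St x -> dom St y -> (rel St x y <-> lt_omega2 (f x) (f y)).
Hypothesis Hslo : slo St.

Lemma rel_g p q : rel St (g p) (g q) <-> lt_omega2 p q.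
Proof. rewrite Hr by auto. rewrite !Hfg. tauto. Qed.

Lemma ga_inj : forall i j, g (false, i) = g (false, j) -> i = j.
Proof. intros i j E. apply (f_equal f) in E. rewrite !Hfg in E. congruence. Qed.

Lemma wit K y : exists n, K < n /\ y < g (false, n).
Proof.
  destruct (unbounded (fun n => g (false, n + S K))) with (M := y) as [n Hn].
  - intros i j E. apply ga_inj in E. lia.
  - exists (n + S K). split; auto. lia.
Qed.

Definition rowpt (p : bool * nat) : nat := match p with (false, _) => 0 | (true, j) => S j end.
Definition row2 (e : nat) : nat := rowpt (f (fst (unp e))).
Lemma row2_cp z y : row2 (cpair z y) = rowpt (f z).
Proof. unfold row2. rewrite unp_cpair. reflexivity. Qed.

Lemma mkel p q x : lt_omega2 p q -> lt_omega2 x p -> g q < g x -> gdom St (cpair (g p) (g q)).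
Proof.
  intros H1 H2 H3. apply gdom_dec. repeat split; auto. apply rel_g; auto.
  exists (g x). repeat split; auto. apply rel_g; auto.
Qed.

Lemma dom_g x : dom St x -> x = g (f x).
Proof. intros; symmetry; auto. Qed.

Theorem Gs_omega2 : iso_to (Gs St) (nat * nat) lt_omegasq.
Proof.
  apply (omega2_crit (Gs St) row2).
  - apply slo_Gs; auto.
  -
    intros a b Ha Hb Hab. simpl in *.
    destruct Ha as (z1 & y1 & x1 & -> & Hz1 & Hy1 & _).
    destruct Hb as (z2 & y2 & x2 & -> & Hz2 & Hy2 & _).
    apply grel_dec in Hab. rewrite !row2_cp.
    destruct Hab as [H|[<- _]]; [|lia].
    apply Hr in H; auto. unfold lt_omega2 in H.
    destruct (f z1) as [[|] n1], (f z2) as [[|] n2]; simpl in *; intuition (try discriminate; try lia).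
  -
    intros a Ha. simpl in Ha.
    destruct Ha as (z & y & x & -> & Hz & Hy & Hx & Hzy & Hxz & Hyx).
    rewrite row2_cp. apply Hr in Hzy; auto. apply Hr in Hxz; auto.
    destruct (f z) as [[|] j] eqn:Ez.
    + destruct (f y) as [[|] k] eqn:Ey; unfold lt_omega2 in Hzy; simpl in Hzy;
        [|intuition discriminate].
      assert (Hjk : j < k) by intuition (try discriminate; try lia).
      exists (map (fun k' => cpair z (g (true, k'))) (seq 0 k)).
      intros b Hb Hrow Hba. simpl in Hb, Hba.
      destruct Hb as (z' & y' & x' & -> & Hz' & Hy' & Hx' & Hzy' & Hxz' & Hyx').
      rewrite row2_cp in Hrow. simpl in Hrow.
      assert (Ez' : f z' = (true, j)).
      { destruct (f z') as [[|] j']; simpl in Hrow; congruence. }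
      assert (z' = z) by (rewrite (dom_g z'), (dom_g z), Ez, Ez'; auto). subst z'.
      apply grel_dec in Hba. destruct Hba as [H|[_ H]].
      * exfalso. apply (proj1 Hslo z); auto.
      * apply Hr in H; auto. apply Hr in Hzy'; auto. rewrite Ey in H. rewrite Ez in Hzy'.
        unfold lt_omega2 in H, Hzy'.
        destruct (f y') as [[|] k'] eqn:Ey'; simpl in H, Hzy'; [|intuition discriminate].
        apply in_map_iff. exists k'. split.
        -- rewrite (dom_g y'), Ey'; auto.
        -- apply in_seq. intuition (try discriminate; try lia).
    + exists (flat_map (fun i' => map (fun y' => cpair (g (false, i')) y')
                 (seq 0 (msum (fun t => g (false, t)) j))) (seq 0 (S j))).
      intros b Hb Hrow Hba. simpl in Hb, Hba.
      destruct Hb as (z' & y' & x' & -> & Hz' & Hy' & Hx' & Hzy' & Hxz' & Hyx').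
      rewrite row2_cp in Hrow. simpl in Hrow.
      destruct (f z') as [[|] i'] eqn:Ez'; simpl in Hrow; [discriminate|].
      assert (Hi' : i' <= j).
      { apply grel_dec in Hba. destruct Hba as [H|[<- _]].
        - apply Hr in H; auto. rewrite Ez, Ez' in H. unfold lt_omega2 in H; simpl in H.
          intuition (try discriminate; try lia).
        - rewrite Ez in Ez'. injection Ez'; lia. }
      apply Hr in Hxz'; auto. rewrite Ez' in Hxz'. unfold lt_omega2 in Hxz'.
      destruct (f x') as [[|] i''] eqn:Ex'; simpl in Hxz'; [intuition discriminate|].
      assert (Hi'' : i'' < i') by intuition (try discriminate; try lia).
      assert (x' <= msum (fun t => g (false, t)) j).
      { rewrite (dom_g x'), Ex'; auto. apply (msum_ge (fun t => g (false, t))). lia. }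
      apply in_flat_map. exists i'. split; [apply in_seq; lia|].
      apply in_map_iff. exists y'. split.
      * rewrite (dom_g z'), Ez'; auto.
      * apply in_seq. lia.
  -
    intros [|j]; simpl.
    + destruct (wit 0 (g (true, 0))) as [n [_ Hn]].
      exists (cpair (g (false, S n)) (g (true, 0))). split.
      * apply (mkel _ _ (false, n)); auto; unfold lt_omega2; simpl; auto.
      * rewrite row2_cp, Hfg. reflexivity.
    + destruct (wit 0 (g (true, S j))) as [n [_ Hn]].
      exists (cpair (g (true, j)) (g (true, S j))). split.
      * apply (mkel _ _ (false, n)); auto; unfold lt_omega2; simpl; auto.
      * rewrite row2_cp, Hfg. reflexivity.
  -
    intros a Ha. simpl in Ha |- *.
    destruct Ha as (z & y & x & -> & Hz & Hy & Hx & Hzy & Hxz & Hyx).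
    apply Hr in Hzy; auto.
    destruct (f z) as [[|] j] eqn:Ez.
    + destruct (f y) as [[|] k] eqn:Ey; unfold lt_omega2 in Hzy; simpl in Hzy;
        [|intuition discriminate].
      destruct (wit 0 (g (true, S k))) as [n [_ Hn]].
      exists (cpair z (g (true, S k))). split; [|split].
      * rewrite (dom_g z), Ez; auto. apply (mkel _ _ (false, n)); auto;
          unfold lt_omega2; simpl; intuition (try lia).
      * rewrite !row2_cp. auto.
      * apply grel_dec. right. split; auto. rewrite (dom_g y) at 1; auto.
        apply rel_g. rewrite Ey. unfold lt_omega2; simpl; auto.
    + destruct (wit j (g (true, 0))) as [n [Hjn Hn]].
      exists (cpair (g (false, S n)) (g (true, 0))). split; [|split].
      * apply (mkel _ _ (false, n)); auto; unfold lt_omega2; simpl; auto.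
      * rewrite !row2_cp, Hfg, Ez. reflexivity.
      * apply grel_dec. left. rewrite (dom_g z) at 1; auto.
        apply rel_g. rewrite Ez. unfold lt_omega2; simpl; right; split; auto; lia.
Qed.
End W2.

Definition ls (p q : bool * nat) : Prop :=
  match p, q with
  | (false, _), (true, _) => True
  | (b, n), (b', n') => b = b' /\ n' < n
  end.

Lemma ls_iff p q : lt_omegastar2 p q <-> ls p q.
Proof.
  destruct p as [[|] n], q as [[|] m]; unfold lt_omegastar2, rev_ord, ls; simpl;
  intuition (try discriminate; try lia).
Qed.

Definition rs (p q : bool * nat) : nat :=
  match p, q with
  | (true, _), _ => 0
  | (false, k), (true, _) => S k
  | (false, k), (false, _) => S (S k)
  end.

Lemma rs_mono1 p1 q1 p2 q2 : ls p2 p1 -> ls p1 q1 -> ls p2 q2 -> rs p1 q1 <= rs p2 q2.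
Proof.
  destruct p1 as [[|] n1], q1 as [[|] m1], p2 as [[|] n2], q2 as [[|] m2];
  unfold ls, rs; simpl; intuition (try discriminate; try lia).
Qed.

Lemma rs_mono2 p q1 q2 : ls q2 q1 -> ls p q1 -> ls p q2 -> rs p q1 <= rs p q2.
Proof.
  destruct p as [[|] n], q1 as [[|] m1], q2 as [[|] m2];
  unfold ls, rs; simpl; intuition (try discriminate; try lia).
Qed.

Lemma fin_pts p q p' q' : ls p q -> ls p' q' -> (ls p p' \/ (p = p' /\ ls q q')) ->
  rs p q = rs p' q' -> snd p' < S (snd p + snd q) /\ snd q' < S (snd p + snd q).
Proof.
  destruct p as [[|] n], q as [[|] m], p' as [[|] n'], q' as [[|] m'];
  unfold ls, rs; simpl; intros H1 H2 H3 H4;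
  repeat match goal with
  | H : _ /\ _ |- _ => destruct H
  | H : _ \/ _ |- _ => destruct H
  | H : (_, _) = (_, _) |- _ => injection H; clear H; intros
  end; try discriminate; try lia.
Qed.

Section WS2.
Variables (St : str) (f : nat -> bool * nat) (g : bool * nat -> nat).
Hypothesis Hd : forall t, dom St (g t).
Hypothesis Hfg : forall t, f (g t) = t.
Hypothesis Hgf : forall x, dom St x -> g (f x) = x.
Hypothesis Hr : forall x y, dom St x -> dom St y -> (rel St x y <-> lt_omegastar2 (f x) (f y)).
Hypothesis Hslo : slo St.

Lemma rel_gs p q : rel St (g p) (g q) <-> ls p q.
Proof. rewrite Hr by auto. rewrite !Hfg. apply ls_iff. Qed.
Lemma rel_s x y : dom St x -> dom St y -> (rel St x y <-> ls (f x) (f y)).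
Proof. intros. rewrite Hr by auto. apply ls_iff. Qed.

Lemma dom_gs x : dom St x -> x = g (f x).
Proof. intros; symmetry; auto. Qed.

Lemma wits p y : exists xp, ls xp p /\ y < g xp.
Proof.
  destruct p as [b n].
  destruct (unbounded (fun m => g (false, m + S n))) with (M := y) as [m Hm].
  - intros i j E. apply (f_equal f) in E. rewrite !Hfg in E. injection E. lia.
  - exists (false, m + S n). split; auto. destruct b; unfold ls; repeat split; try lia.
Qed.

Lemma mkels p q : ls p q -> gdom St (cpair (g p) (g q)).
Proof.
  intros H. destruct (wits p (g q)) as [xp [H1 H2]].
  apply gdom_dec. repeat split; auto. apply rel_gs; auto.
  exists (g xp). repeat split; auto. apply rel_gs; auto.
Qed.

Definition rowS (e : nat) : nat := rs (f (fst (unp e))) (f (snd (unp e))).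
Lemma rowS_cp z y : rowS (cpair z y) = rs (f z) (f y).
Proof. unfold rowS. rewrite unp_cpair. reflexivity. Qed.

Definition allpts (N : nat) : list (bool * nat) :=
  map (fun n => (false, n)) (seq 0 N) ++ map (fun n => (true, n)) (seq 0 N).
Lemma allpts_in p N : snd p < N -> In p (allpts N).
Proof.
  destruct p as [[|] n]; simpl; intros H; apply in_or_app; [right|left];
  apply in_map_iff; exists n; split; auto; apply in_seq; lia.
Qed.

Theorem Gs_omegastar2 : iso_to (Gs St) (nat * nat) (rev_ord lt_omegasq).
Proof.
  apply iso_to_revs. apply (omega2_crit (revs (Gs St)) rowS).
  - apply slo_rev, slo_Gs; auto.
  - intros a b Ha Hb Hba. simpl in *.
    destruct Ha as (z1 & y1 & x1 & -> & Hz1 & Hy1 & _ & Hzy1 & _).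
    destruct Hb as (z2 & y2 & x2 & -> & Hz2 & Hy2 & _ & Hzy2 & _).
    apply grel_dec in Hba. rewrite !rowS_cp.
    apply rel_s in Hzy1; auto. apply rel_s in Hzy2; auto.
    destruct Hba as [H|[<- H]]; apply rel_s in H; auto.
    + apply rs_mono1; auto.
    + apply rs_mono2; auto.
  - intros a Ha. simpl in Ha.
    destruct Ha as (z & y & x & -> & Hz & Hy & Hx & Hzy & _).
    set (N := S (snd (f z) + snd (f y))).
    exists (flat_map (fun p => map (fun q => cpair (g p) (g q)) (allpts N)) (allpts N)).
    intros b Hb Hrow Hab. simpl in Hb, Hab.
    destruct Hb as (z' & y' & x' & -> & Hz' & Hy' & Hx' & Hzy' & _).
    rewrite !rowS_cp in Hrow. apply grel_dec in Hab.
    assert (Hb : snd (f z') < N /\ snd (f y') < N).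
    { apply fin_pts; try apply rel_s; auto.
      destruct Hab as [H|[<- H]]; [left|right; split; auto]; apply rel_s; auto. }
    apply in_flat_map. exists (f z'). split. apply allpts_in; tauto.
    apply in_map_iff. exists (f y'). split.
    + rewrite !Hgf; auto.
    + apply allpts_in; tauto.
  - intros [|k].
    + exists (cpair (g (true, 1)) (g (true, 0))). split.
      * apply mkels. unfold ls; repeat split; try lia.
      * rewrite rowS_cp, !Hfg. reflexivity.
    + exists (cpair (g (false, k)) (g (true, 0))). split.
      * apply mkels. unfold ls; repeat split; try lia.
      * rewrite rowS_cp, !Hfg. reflexivity.
  - intros a Ha. simpl in Ha |- *.
    destruct Ha as (z & y & x & -> & Hz & Hy & Hx & Hzy & _).
    apply rel_s in Hzy; auto.
    destruct (f z) as [[|] j] eqn:Ez.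
    + exists (cpair (g (true, S j)) (g (true, 0))). split; [|split].
      * apply mkels. unfold ls; repeat split; try lia.
      * rewrite !rowS_cp, !Hfg, Ez. reflexivity.
      * apply grel_dec. left. rewrite (dom_gs z) at 1; auto. apply rel_gs. rewrite Ez.
        unfold ls; repeat split; try lia.
    + destruct (f y) as [[|] l] eqn:Ey.
      * exists (cpair z (g (true, S l))). split; [|split].
        -- rewrite (dom_gs z), Ez; auto. apply mkels. unfold ls; repeat split; try lia.
        -- rewrite !rowS_cp, !Hfg, Ez, Ey. reflexivity.
        -- apply grel_dec. right. split; auto. rewrite (dom_gs y) at 1; auto.
           apply rel_gs. rewrite Ey. unfold ls; repeat split; try lia.
      * exists (cpair (g (false, S j)) (g (true, 0))). split; [|split].
        -- apply mkels. unfold ls; repeat split; try lia.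
        -- rewrite !rowS_cp, !Hfg, Ez, Ey. reflexivity.
        -- apply grel_dec. left. rewrite (dom_gs z) at 1; auto. apply rel_gs. rewrite Ez.
           unfold ls; repeat split; try lia.
Qed.
End WS2.

Lemma iso_least_rev A B : iso A B -> has_least B -> has_least A.
Proof.
  intros (f & Hd & Hinj & Hsur & Hrel) (b0 & Hb0 & H).
  destruct (Hsur b0 Hb0) as [a0 [Ha0 <-]].
  exists a0. split; auto. intros a Ha Hne. apply Hrel; auto.
Qed.

Lemma w2_slo St : iso_to St (bool * nat) lt_omega2 -> slo St.
Proof.
  intros H. apply (iso_to_slo _ _ _ H).
  - intros [[|] n]; unfold lt_omega2; simpl; intuition (try discriminate; try lia).
  - intros [[|] n] [[|] m] [[|] k]; unfold lt_omega2; simpl; intuition (try discriminate; try lia).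
  - intros [[|] n] [[|] m] Hne; unfold lt_omega2; simpl;
      destruct (lt_eq_lt_dec n m) as [[|]|]; subst; intuition (try discriminate; try lia).
Qed.

Lemma ws2_slo St : iso_to St (bool * nat) lt_omegastar2 -> slo St.
Proof.
  intros H. apply (iso_to_slo _ _ _ H).
  - intros [[|] n]; unfold lt_omegastar2, rev_ord; simpl; intuition (try discriminate; try lia).
  - intros [[|] n] [[|] m] [[|] k]; unfold lt_omegastar2, rev_ord; simpl;
      intuition (try discriminate; try lia).
  - intros [[|] n] [[|] m] Hne; unfold lt_omegastar2, rev_ord; simpl;
      destruct (lt_eq_lt_dec n m) as [[|]|]; subst; intuition (try discriminate; try lia).
Qed.

Lemma w2_G St : iso_to St (bool * nat) lt_omega2 -> iso_to (Gs St) (nat * nat) lt_omegasq.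
Proof.
  intros H. pose proof (w2_slo St H) as Hs.
  destruct (iso_to_inv _ _ _ H) as (f & g & I & G & GF & R).
  apply (Gs_omega2 St f g); auto; apply G.
Qed.

Lemma ws2_G St : iso_to St (bool * nat) lt_omegastar2 ->
  iso_to (Gs St) (nat * nat) (rev_ord lt_omegasq).
Proof.
  intros H. pose proof (ws2_slo St H) as Hs.
  destruct (iso_to_inv _ _ _ H) as (f & g & I & G & GF & R).
  apply (Gs_omegastar2 St f g); auto; apply G.
Qed.

Lemma least_w2 St : iso_to St (bool * nat) lt_omega2 -> has_least St.
Proof.
  intros H. apply (iso_to_least _ _ _ H). exists (false, 0).
  intros [[|] n] Hne; unfold lt_omega2; simpl; auto.
  right; split; auto. destruct n; [congruence|lia].
Qed.

Lemma noleast_ws2 St : iso_to St (bool * nat) lt_omegastar2 -> ~ has_least St.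
Proof.
  intros H Hl. apply (iso_to_least _ _ _ H) in Hl. destruct Hl as [[b n] Ht].
  destruct b.
  - specialize (Ht (false, 0) ltac:(congruence)). unfold lt_omegastar2, rev_ord in Ht;
    simpl in Ht; intuition discriminate.
  - specialize (Ht (false, S n) ltac:(intros E; injection E; lia)).
    unfold lt_omegastar2, rev_ord in Ht; simpl in Ht; intuition (try discriminate; try lia).
Qed.

Lemma least_sq St : iso_to St (nat * nat) lt_omegasq -> has_least St.
Proof.
  intros H. apply (iso_to_least _ _ _ H). exists (0, 0).
  intros [i j] Hne; unfold lt_omegasq; simpl.
  destruct i; [right; split; auto; destruct j; [congruence|lia]|left; lia].
Qed.

Lemma noleast_sqr St : iso_to St (nat * nat) (rev_ord lt_omegasq) -> ~ has_least St.
Proof.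
  intros H Hl. apply (iso_to_least _ _ _ H) in Hl. destruct Hl as [[i j] Ht].
  specialize (Ht (S i, 0) ltac:(intros E; injection E; lia)).
  unfold rev_ord, lt_omegasq in Ht; simpl in Ht. lia.
Qed.

Lemma diag_G A GA : slo A ->
  (forall phi, apply_op Gop (diagram A) phi <-> diagram GA phi) ->
  forall phi, diagram GA phi <-> diagram (Gs A) phi.
Proof. intros Hs E phi. rewrite <- E. apply apply_Gop; auto. Qed.

Theorem theorem3p2 :
  comp_reducible (class2 lt_omega2 lt_omegastar2)
                 (class2 lt_omegasq (rev_ord lt_omegasq)).
Proof.
  exists Gop. split; [apply Gop_ce|split].
  - intros A HA. exists (Gs A).
    assert (Hs : slo A) by (destruct HA; [apply w2_slo|apply ws2_slo]; auto).
    split.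
    + destruct HA as [H|H]; [left; apply w2_G|right; apply ws2_G]; auto.
    + apply apply_Gop; auto.
  - intros A B GA GB HA HB EA EB.
    assert (HsA : slo A) by (destruct HA; [apply w2_slo|apply ws2_slo]; auto).
    assert (HsB : slo B) by (destruct HB; [apply w2_slo|apply ws2_slo]; auto).
    pose proof (diag_G A GA HsA EA) as DA. pose proof (diag_G B GB HsB EB) as DB.
    destruct HA as [HA|HA], HB as [HB|HB].
    + split; intros _.
      * apply (iso_to_iso _ _ _ _ (diag_iso_to _ _ _ _ DA (w2_G A HA))
                                  (diag_iso_to _ _ _ _ DB (w2_G B HB))).
      * apply (iso_to_iso _ _ _ _ HA HB).
    + split; intros Hi; exfalso.
      * apply (noleast_ws2 B HB). apply (iso_least A B Hi). apply least_w2; auto.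
      * apply (noleast_sqr GB (diag_iso_to _ _ _ _ DB (ws2_G B HB))).
        apply (iso_least GA GB Hi). apply least_sq.
        apply (diag_iso_to _ _ _ _ DA (w2_G A HA)).
    + split; intros Hi; exfalso.
      * apply (noleast_ws2 A HA). apply (iso_least_rev A B Hi). apply least_w2; auto.
      * apply (noleast_sqr GA (diag_iso_to _ _ _ _ DA (ws2_G A HA))).
        apply (iso_least_rev GA GB Hi). apply least_sq.
        apply (diag_iso_to _ _ _ _ DB (w2_G B HB)).
    + split; intros _.
      * apply (iso_to_iso _ _ _ _ (diag_iso_to _ _ _ _ DA (ws2_G A HA))
                                  (diag_iso_to _ _ _ _ DB (ws2_G B HB))).
      * apply (iso_to_iso _ _ _ _ HA HB).
Qed.
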